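(* Let $(G,M,\Delta)$ be a Garside structure and $(H,N,\delta)$ a parabolic substructure. Put $\omega=\delta^{-1}\Delta$ and $\Phi(\alpha)=\Delta\alpha\Delta^{-1}$. Let $c\in M$ be $N$-reduced, let $k\ge0$ be an integer, and let $d=\omega_1\omega_2\cdots\omega_k\,\Phi^{-k}(c)$, where $\omega_i=\Phi^{-i+1}(\omega)$ for $i\in\{1,\dots,k\}$. Then $d$ is $N$-reduced.
   Context: Let $G$ be a group and $M$ a submonoid with $M\cap M^{-1}=\{1\}$. Define $\alpha\le_L\beta$ iff $\alpha^{-1}\beta\in M$, and $\alpha\le_R\beta$ iff $\beta\alpha^{-1}\in M$. For $a\in M$ let $\mathrm{Div}_L(a)=\{b\in M: b\le_L a\}$, $\mathrm{Div}_R(a)=\{b\in M: b\le_R a\}$; $a$ is balanced if these coincide, and then $\mathrm{Div}(a)$ denotes this set. $M$ is Noetherian if each $a\in M$ admits an $n$ such that $a$ is not a product of more than $n$ non-trivial factors. A Garside structure $(G,M,\Delta)$: $\Delta\in M$ balanced, $M$ Noetherian, $\mathrm{Div}(\Delta)$ finite and generating $M$ as a monoid and $G$ as a group, $(G,\le_L)$ a lattice with meet $\wedge_L$. A parabolic substructure $(H,N,\delta)$: $\delta\in M$ balanced, $H$ (resp. $N$) the subgroup (resp. submonoid) generated by $\mathrm{Div}(\delta)$, and $\mathrm{Div}(\delta)=\mathrm{Div}(\Delta)\cap N$; it is assumed $H\neq\{1\}$. An element $a\in M$ is $N$-reduced if $a\wedge_L\delta=1$, equivalently if the only $b\in N$ with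 $b\le_L a$ is $b=1$. *)

(* Defs.v *)
From Stdlib Require Import List.
Import ListNotations.
Set Implicit Arguments.

Record Group := {
  carrier :> Type;
  gmul : carrier -> carrier -> carrier;
  gone : carrier;
  ginv : carrier -> carrier;
  gmulA : forall x y z, gmul x (gmul y z) = gmul (gmul x y) z;
  gmul1l : forall x, gmul gone x = x;
  gmul1r : forall x, gmul x gone = x;
  gmulVl : forall x, gmul (ginv x) x = gone;
  gmulVr : forall x, gmul x (ginv x) = gone
}.

Section Garside.
Variable G : Group.
Local Notation "x * y" := (gmul G x y).
Local Notation "1" := (gone G).
Local Notation "x ^-1" := (ginv G x) (at level 2, left associativity, format "x ^-1").

Definition pointed_submonoid (M : G -> Prop) : Prop :=
  M 1 /\ (forall x y, M x -> M y -> M (x * y)) /\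
  (forall x, M x -> M (x^-1) -> x = 1).

Definition leL (M : G -> Prop) (a b : G) : Prop := M (a^-1 * b).
Definition leR (M : G -> Prop) (a b : G) : Prop := M (b * a^-1).

Definition DivL (M : G -> Prop) (a : G) (b : G) : Prop := M b /\ leL M b a.
Definition DivR (M : G -> Prop) (a : G) (b : G) : Prop := M b /\ leR M b a.

Definition balanced (M : G -> Prop) (a : G) : Prop :=
  M a /\ forall b, DivL M a b <-> DivR M a b.

(* Div(a) for balanced a *)
Definition Div (M : G -> Prop) (a : G) : G -> Prop := DivL M a.

Definition gprod (l : list G) : G := fold_right (fun x acc => x * acc) 1 l.

Definition noetherian (M : G -> Prop) : Prop :=
  forall a, M a -> exists n : nat, forall l : list G,
    (forall x, In x l -> M x /\ x <> 1) -> gprod l = a -> length l <= n.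

Inductive gen_monoid (S : G -> Prop) : G -> Prop :=
| gm_one : gen_monoid S 1
| gm_gen : forall x, S x -> gen_monoid S x
| gm_mul : forall x y, gen_monoid S x -> gen_monoid S y -> gen_monoid S (x * y).

Inductive gen_group (S : G -> Prop) : G -> Prop :=
| gg_one : gen_group S 1
| gg_gen : forall x, S x -> gen_group S x
| gg_inv : forall x, gen_group S x -> gen_group S (x^-1)
| gg_mul : forall x y, gen_group S x -> gen_group S y -> gen_group S (x * y).

Definition finite_set (S : G -> Prop) : Prop :=
  exists l : list G, forall x, S x <-> In x l.

Definition is_glbL (M : G -> Prop) (x y m : G) : Prop :=
  leL M m x /\ leL M m y /\ forall z, leL M z x -> leL M z y -> leL M z m.
Definition is_lubL (M : G -> Prop) (x y j : G) : Prop :=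
  leL M x j /\ leL M y j /\ forall z, leL M x z -> leL M y z -> leL M j z.

Definition lattice_L (M : G -> Prop) : Prop :=
  forall x y, (exists m, is_glbL M x y m) /\ (exists j, is_lubL M x y j).

Definition garside_structure (M : G -> Prop) (Delta : G) : Prop :=
  pointed_submonoid M /\
  balanced M Delta /\
  noetherian M /\
  finite_set (Div M Delta) /\
  (forall x, M x <-> gen_monoid (Div M Delta) x) /\
  (forall x, gen_group (Div M Delta) x) /\
  lattice_L M.

(* parabolic substructure (H, N, delta), H = <Div delta>, N = <Div delta>_monoid *)
Definition parabolic_substructure (M : G -> Prop) (Delta delta : G) : Prop :=
  balanced M delta /\
  (forall b, Div M delta b <-> (Div M Delta b /\ gen_monoid (Div M delta) b)) /\
  (exists h, gen_group (Div M delta) h /\ h <> 1).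

Definition N_reduced (M : G -> Prop) (delta a : G) : Prop :=
  M a /\ is_glbL M a delta 1.

Definition Phi_inv (Delta : G) (a : G) : G := Delta^-1 * a * Delta.
Definition Phi_inv_iter (Delta : G) (n : nat) (a : G) : G := Nat.iter n (Phi_inv Delta) a.

(* omega_1 ... omega_k, with omega_i = Phi^{-(i-1)}(omega), omega = delta^{-1} Delta *)
Fixpoint omega_prod (Delta delta : G) (k : nat) : G :=
  match k with
  | O => 1
  | S k' => omega_prod Delta delta k' * Phi_inv_iter Delta k' (delta^-1 * Delta)
  end.

End Garside.

(* Main.v *)
Require Import Defs.
From Stdlib Require Import List.

Lemma ginvK (G : Group) (x : G) : ginv G (ginv G x) = x.
Proof.
  rewrite <- (gmul1r G (ginv G (ginv G x))).
  rewrite <- (gmulVl G x). rewrite gmulA. rewrite gmulVl. apply gmul1l.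
Qed.

Lemma ginv_uniq (G : Group) (a b : G) : gmul G a b = gone G -> a = ginv G b.
Proof.
  intro H. rewrite <- (gmul1r G a), <- (gmulVr G b), gmulA, H. apply gmul1l.
Qed.

Lemma ginvM (G : Group) (x y : G) : ginv G (gmul G x y) = gmul G (ginv G y) (ginv G x).
Proof.
  symmetry. apply ginv_uniq.
  rewrite <- gmulA, (gmulA G (ginv G x) x y), gmulVl, gmul1l. apply gmulVl.
Qed.

Lemma gc1 (G : Group) (x y : G) : gmul G (ginv G x) (gmul G x y) = y.
Proof. rewrite gmulA, gmulVl; apply gmul1l. Qed.
Lemma gc2 (G : Group) (x y : G) : gmul G x (gmul G (ginv G x) y) = y.
Proof. rewrite gmulA, gmulVr; apply gmul1l. Qed.
Lemma ginv1 (G : Group) : ginv G (gone G) = gone G.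
Proof. rewrite <- (gmul1l G (ginv G (gone G))). apply gmulVr. Qed.

Ltac gs := repeat progress (rewrite ?ginvM, ?ginvK, ?ginv1, ?gmul1l, ?gmul1r, <- ?gmulA,
   ?gc1, ?gc2, ?gmulVl, ?gmulVr).

Lemma phi_pres (G : Group) (M : G -> Prop) (Delta : G) :
  garside_structure G M Delta ->
  forall x, M x -> M (gmul G (gmul G (ginv G Delta) x) Delta) /\
                  M (gmul G (gmul G Delta x) (ginv G Delta)).
Proof.
  intros [[M1 [MM Mp]] [[MD Hbal] [_ [_ [Hgen _]]]]] x Hx.
  apply Hgen in Hx. induction Hx as [| s Hs | x y _ [IH1 IH2] _ [IH3 IH4]].
  - gs. split; assumption.
  - destruct Hs as [Ms Hs]. unfold leL in Hs. split.
    + assert (Ht : DivR G M Delta (gmul G (ginv G s) Delta)).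
      { split; [assumption|]. unfold leR. gs. assumption. }
      apply Hbal in Ht. destruct Ht as [_ Ht]. unfold leL in Ht. revert Ht; gs; auto.
    + assert (Ht : DivR G M Delta s) by (apply Hbal; split; assumption).
      destruct Ht as [_ Ht]. unfold leR in Ht.
      assert (Hu : DivL G M Delta (gmul G Delta (ginv G s))).
      { split; [assumption|]. unfold leL. gs. assumption. }
      apply Hbal in Hu. destruct Hu as [_ Hu]. unfold leR in Hu. revert Hu; gs; auto.
  - split.
    + assert (E : gmul G (gmul G (ginv G Delta) (gmul G x y)) Delta =
                  gmul G (gmul G (gmul G (ginv G Delta) x) Delta)
                         (gmul G (gmul G (ginv G Delta) y) Delta)) by (gs; reflexivity).
      rewrite E. apply MM; assumption.
    + assert (E : gmul G (gmul G Delta (gmul G x y)) (ginv G Delta) =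
                  gmul G (gmul G (gmul G Delta x) (ginv G Delta))
                         (gmul G (gmul G Delta y) (ginv G Delta))) by (gs; reflexivity).
      rewrite E. apply MM; assumption.
Qed.

Lemma Meq (G : Group) (M : G -> Prop) (x y : G) : M x -> x = y -> M y.
Proof. intros H E; subst; exact H. Qed.
Arguments Meq {G M x y}.

Lemma step (G : Group) (M : G -> Prop) (Delta delta a : G) :
  garside_structure G M Delta ->
  parabolic_substructure G M Delta delta ->
  N_reduced G M delta a ->
  N_reduced G M delta (gmul G (ginv G delta) (gmul G a Delta)).
Proof.
  intros HG HP [Ma [_ [_ Hred]]].
  pose proof (phi_pres _ _ _ HG) as PP.
  destruct HG as [[M1 [MM Mp]] [[MD Hbal] [_ [_ [Hgen [_ Hlat]]]]]].
  destruct HP as [[Md Hbd] [Hpar _]].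
  assert (Ddd : Div G M delta delta).
  { split; [exact Md|]. unfold leL. apply (Meq M1). gs. reflexivity. }
  assert (DdD : Div G M Delta delta) by (apply Hpar; exact Ddd).
  assert (Me : M (gmul G (ginv G delta) (gmul G a Delta))).
  { apply (Meq (MM _ _ (proj2 DdD) (proj1 (PP a Ma)))). gs. reflexivity. }
  assert (Key : forall b, M b -> leL G M b (gmul G (ginv G delta) (gmul G a Delta)) ->
                 leL G M b delta -> b = gone G).
  { intros b Mb Hbe Hbd0. unfold leL in *.
    assert (DbD : Div G M Delta b) by (apply Hpar; split; assumption).
    destruct DbD as [_ HbD]. unfold leL in HbD.
    assert (H1 : M (gmul G (ginv G (gmul G (gmul G delta b) (ginv G Delta))) (gone G))).
    { apply Hred; unfold leL.
      - apply (Meq (proj2 (PP _ Hbe))). gs. reflexivity.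
      - apply (Meq (proj2 (PP _ HbD))). gs. reflexivity. }
    pose proof (proj1 (PP _ H1)) as H2.
    assert (Dx : Div G M delta (gmul G delta b)).
    { apply Hpar. split.
      - split; [apply MM; assumption|]. unfold leL. apply (Meq H2). gs. reflexivity.
      - apply gm_mul; apply gm_gen; [exact Ddd|]. split; assumption. }
    destruct Dx as [_ Dx]. unfold leL in Dx.
    apply Mp; [exact Mb|]. apply (Meq Dx). gs. reflexivity. }
  split; [exact Me|]. unfold is_glbL.
  split; [unfold leL; apply (Meq Me); gs; reflexivity|].
  split; [unfold leL; apply (Meq Md); gs; reflexivity|].
  intros z Hz1 Hz2.
  destruct (Hlat (gmul G (ginv G delta) (gmul G a Delta)) delta) as [[m [Hm1 [Hm2 Hm3]]] _].
  assert (Mm : M m).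
  { assert (L : leL G M (gone G) m).
    { apply Hm3; unfold leL.
      - apply (Meq Me); gs; reflexivity.
      - apply (Meq Md); gs; reflexivity. }
    unfold leL in L. apply (Meq L); gs; reflexivity. }
  pose proof (Key m Mm Hm1 Hm2) as Em. subst m.
  apply Hm3; assumption.
Qed.

Lemma iter_mul (G : Group) (D : G) k x y :
  Phi_inv_iter G D k (gmul G x y) = gmul G (Phi_inv_iter G D k x) (Phi_inv_iter G D k y).
Proof.
  induction k; simpl; [reflexivity|].
  change (Phi_inv G D (Phi_inv_iter G D k (gmul G x y)) =
     gmul G (Phi_inv G D (Phi_inv_iter G D k x)) (Phi_inv G D (Phi_inv_iter G D k y))).
  rewrite IHk. unfold Phi_inv. gs. reflexivity.
Qed.

Lemma iter_succ (G : Group) (D : G) k x :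
  Phi_inv_iter G D (S k) x = Phi_inv_iter G D k (Phi_inv G D x).
Proof.
  unfold Phi_inv_iter. induction k; simpl; [reflexivity|].
  simpl in IHk. rewrite IHk. reflexivity.
Qed.

Theorem lemma3p7 (G : Group) (M : G -> Prop) (Delta delta c : G) (k : nat) :
  garside_structure G M Delta ->
  parabolic_substructure G M Delta delta ->
  N_reduced G M delta c ->
  N_reduced G M delta
    (gmul G (omega_prod G Delta delta k) (Phi_inv_iter G Delta k c)).
Proof.
  intros HG HP. revert c. induction k; intros c Hc.
  - simpl. rewrite gmul1l. exact Hc.
  - assert (E : gmul G (omega_prod G Delta delta (S k)) (Phi_inv_iter G Delta (S k) c) =
      gmul G (omega_prod G Delta delta k)
        (Phi_inv_iter G Delta k (gmul G (ginv G delta) (gmul G c Delta)))).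
    { rewrite iter_succ. simpl omega_prod. rewrite <- gmulA, <- iter_mul.
      f_equal. f_equal. unfold Phi_inv. gs. reflexivity. }
    rewrite E. apply IHk. apply step; assumption.
Qed.
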